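(* Let $G$ be a metrizable abelian topological group in which every cyclic subgroup is discrete. The following are equivalent: (i) $G$ contains a subgroup topologically isomorphic to $S_A$ for some infinite subset $A$ of $G$; (ii) $G$ is not NSS.
   Context: For $a\in G$, $\langle a\rangle$ is the cyclic subgroup generated by $a$ with the subspace topology. $S_A=\bigoplus_{a\in A}\langle a\rangle$ is the subgroup of finitely supported elements of $\prod_{a\in A}\langle a\rangle$, with the subspace topology of the Tychonoff product topology. A topological group is NSS if it has a neighbourhood of the identity containing no non-trivial subgroup. *)

(* Defs.v *)
From HB Require Import structures.
From mathcomp Require Import all_boot all_order all_algebra.
From mathcomp Require Import all_classical all_reals all_analysis.
From mathcomp Require Import Rstruct Rstruct_topology.
Set Implicit Arguments. Unset Strict Implicit. Unset Printing Implicit Defensive.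
Import Order.TTheory GRing.Theory Num.Theory.
Local Open Scope classical_set_scope.
Local Open Scope ring_scope.

(* Topologies: a subset [S : set T] of a topological space is viewed as the
   type [set_type S] (written [S : Type]) with MathComp-Analysis' subspace
   (= initial for the inclusion) topology; dependent products
   [prod_topology T] carry the Tychonoff product topology. *)

Definition metrizable (T : topologicalType) : Prop :=
  exists d : T -> T -> Rdefinitions.R,
    [/\ forall x y, d x y = 0 <-> x = y,
        forall x y, d x y = d y x,
        forall x y z, d x z <= d x y + d y z
      & forall U : set T, open U <->
          (forall x, U x -> exists2 e : Rdefinitions.R, 0 < e &
                [set y | d x y < e] `<=` U)].

Definition is_subgroup (G : zmodType) (H : set G) : Prop :=
  H 0 /\ (forall x y, H x -> H y -> H (x - y)).

Definition cyc (G : zmodType) (a : G) : set G := [set x | exists n : int, x = a *~ n].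

Definition discrete_subspace (T : topologicalType) (S : set T) : Prop :=
  forall x : S, open [set x].

Definition NSS (G : topologicalZmodType) : Prop :=
  exists U : set G, nbhs (0 : G) U /\
    forall H : set G, is_subgroup H -> H `<=` U -> H = [set 0].

Definition cyc_prod (G : topologicalZmodType) (A : set G) :=
  prod_topology (fun a : A => (cyc (val a) : Type)).

(* S_A = (+)_{a in A} <a> : the finitely supported elements of the product *)
Definition S_set (G : topologicalZmodType) (A : set G) : set (cyc_prod A) :=
  [set f | finite_set [set a : set_type A |
     val ((f : forall a : set_type A, set_type (cyc (val a))) a) != 0]].

Definition S_ (G : topologicalZmodType) (A : set G) : Type := @S_set G A.

Definition S_add_rel (G : topologicalZmodType) (A : set G) (f g h : S_ A) : Prop :=
  let ev (u : S_ A) (a : set_type A) : G :=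
    val ((val u : forall a : set_type A, set_type (cyc (val a))) a) in
  forall a : set_type A, ev h a = ev f a + ev g a.

Definition topIsoS (G : topologicalZmodType) (A : set G) (H : set G) : Prop :=
  is_subgroup H /\
  exists (phi : S_ A -> (H : Type)) (psi : (H : Type) -> S_ A),
    [/\ cancel phi psi, cancel psi phi,
        continuous phi, continuous psi
      & forall f g h : S_ A, S_add_rel f g h ->
          val (phi h) = val (phi f) + val (phi g)].

(* Main.v *)
Require Import Defs.
From HB Require Import structures.
From mathcomp Require Import all_boot all_order all_algebra.
From mathcomp Require Import all_classical all_reals all_analysis.
From mathcomp Require Import Rstruct Rstruct_topology.
Set Implicit Arguments. Unset Strict Implicit. Unset Printing Implicit Defensive.
Import Order.TTheory GRing.Theory Num.Theory.
Local Open Scope classical_set_scope.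
Local Open Scope ring_scope.


Lemma subgroup_cyc (G : zmodType) (H : set G) (x : G) : is_subgroup H -> H x -> cyc x `<=` H.
Proof.
move=> [H0 HB] Hx.
have HN y : H y -> H (- y) by move=> Hy; rewrite -sub0r; apply: HB.
have HD y z : H y -> H z -> H (y + z) by move=> Hy Hz; rewrite -[z]opprK; apply: HB => //; apply: HN.
have Hn n : H (x *+ n) by elim: n => [|n IH]; rewrite ?mulr0n // mulrS; apply: HD.
move=> _ [[n|n] ->]; first exact: Hn.
by rewrite NegzE mulrNz; apply: HN; apply: Hn.
Qed.

Lemma cyc_subr (G : zmodType) (a x y : G) : cyc a x -> cyc a y -> cyc a (x - y).
Proof. by move=> [m ->] [n ->]; exists (m - n); rewrite mulrzBr. Qed.

Lemma cyc0 (G : zmodType) (a : G) : cyc a 0.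
Proof. by exists 0; rewrite mulr0z. Qed.

Lemma discr_open (G : topologicalZmodType) (a : G) : discrete_subspace (cyc a) ->
  exists O : set G, open O /\ O 0 /\ forall y, cyc a y -> O y -> y = 0.
Proof.
move=> hd.
have m0 : (0 : G) \in cyc a by apply: mem_set; exact: cyc0.
case: (hd (exist _ 0 m0)) => O oO eqO.
exists O; split => //; split.
  have : (set_val @^-1` O) (exist _ 0 m0) by rewrite eqO.
  by [].
move=> y cy Oy.
have my : y \in cyc a by apply: mem_set.
have : (set_val @^-1` O) (exist _ y my) by [].
by rewrite eqO => /(congr1 val).
Qed.
Section TG.
Variable G : topologicalZmodType.

Lemma nbhs0_split (W : set G) : nbhs 0 W -> exists Z : set G, nbhs 0 Z /\
  (forall x y, Z x -> Z y -> W (x + y)) /\ (forall x y, Z x -> Z y -> W (x - y)).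
Proof.
move=> W0.
have hA : nbhs ((0:G), (0:G)) [set p : G * G | W (p.1 + p.2)].
  apply: (@add_continuous G (0,0)); by rewrite /= addr0.
have hS : nbhs ((0:G), (0:G)) [set p : G * G | W (p.1 - p.2)].
  apply: (@sub_continuous G (0,0)); by rewrite /= subr0.
case: hA => -[P Q] /= [nP nQ] sPQ.
case: hS => -[P' Q'] /= [nP' nQ'] sPQ'.
exists (P `&` Q `&` (P' `&` Q')); split.
  by apply: filterI; apply: filterI.
split=> x y [[Px Qx] [P'x Q'x]] [[Py Qy] [P'y Q'y]].
  by apply: (sPQ (x, y)).
by apply: (sPQ' (x, y)).
Qed.

Lemma nbhs_shift0 (x : G) (V : set G) : nbhs x V -> nbhs 0 [set y | V (x + y)].
Proof.
move=> Vx.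
have c : continuous (fun y : G => x + y).
  move=> y; apply: (@continuous_comp _ _ _ (fun y => (x, y)) (fun p : G * G => p.1 + p.2)).
    by apply: cvg_pair => /=; [exact: cvg_cst|exact: cvg_id].
  exact: add_continuous.
by apply: (c 0); rewrite /= addr0.
Qed.

Lemma nbhs_unshift (x : G) (E : set G) : nbhs 0 E -> nbhs x [set y | E (y - x)].
Proof.
move=> E0.
have c : continuous (fun y : G => y - x).
  move=> y; apply: (@continuous_comp _ _ _ (fun y => (y, x)) (fun p : G * G => p.1 - p.2)).
    by apply: cvg_pair => /=; [exact: cvg_id|exact: cvg_cst].
  exact: sub_continuous.
by apply: (c x); rewrite /= subrr.
Qed.

End TG.
Lemma metr_base (G : topologicalZmodType) : metrizable G ->
  exists Bs : nat -> set G, (forall n, nbhs 0 (Bs n)) /\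
    (forall V, nbhs 0 V -> exists n, Bs n `<=` V).
Proof.
case=> d [d0 dsym dtri dopen].
exists (fun n => [set y | d 0 y < n.+1%:R^-1]); split.
  move=> n; apply: open_nbhs_nbhs; split; last first.
    by rewrite /= (proj2 (d0 0 0) erefl).
  apply/dopen => x /= hx; exists (n.+1%:R^-1 - d 0 x); first by rewrite subr_gt0.
  move=> y /= hy; apply: (le_lt_trans (dtri 0 x y)).
  by rewrite -ltrBrDl.
move=> V; rewrite nbhsE => -[U [oU U0 UV]].
have [e e0 eU] := (proj1 (dopen U) oU 0 U0).
have [k hk] := ltr_add_invr e0; rewrite add0r in hk.
exists k => y /= hy; apply/UV/eU => /=.
exact: lt_trans hk.
Qed.

Section Constr.
Variable G : topologicalZmodType.
Hypothesis hnss : ~ NSS G.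
Hypothesis hdisc : forall a : G, discrete_subspace (cyc a).
Variable Bs : nat -> set G.
Hypothesis hB : forall n, nbhs 0 (Bs n).

Definition stepP (W : set G) (p : G * set G * set G) :=
  [/\ p.1.1 != 0, cyc p.1.1 `<=` p.1.2,
      (forall x y, p.1.2 x -> p.1.2 y -> W (x + y)),
      nbhs 0 p.2 /\ p.2 `<=` p.1.2
    & (forall x y, p.2 x -> p.2 y -> cyc p.1.1 (x - y) -> x - y = 0)].

Lemma step_ex (W : set G) : nbhs 0 W -> exists p, stepP W p.
Proof.
move=> W0.
have [Z' [Z'0 [Z'add _]]] := nbhs0_split W0.
have [H [sH [HZ' Hne]]] : exists H : set G, is_subgroup H /\ H `<=` Z' /\ H <> [set 0].
  apply: contrapT => hn; apply: hnss; exists Z'; split => // H sH HZ.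
  by apply: contrapT => hne; apply: hn; exists H.
have [x Hx x0] : exists2 x, H x & x != 0.
  apply: contrapT => hn; apply: Hne; apply/seteqP; split => y /=.
    by move=> Hy; apply/eqP; apply: contrapT => /negP y0; apply: hn; exists y.
  by move=> ->; case: sH.
have cH := subgroup_cyc sH Hx.
have [Ob [oOb [Ob0 Obc]]] := @discr_open G x (@hdisc x).
have [Z [Z0 [_ Zsub]]] := nbhs0_split (open_nbhs_nbhs (conj oOb Ob0) : nbhs 0 Ob).
exists (x, Z', Z `&` Z'); split => //=.
- by move=> y /cH /HZ'.
- split; first exact: filterI.
  by move=> y [].
- by move=> y z [Zy _] [Zz _] cyz; apply: Obc => //; apply: Zsub.
Qed.

Definition step (W : set G) (hW : nbhs 0 W) : {p | stepP W p} := cid (step_ex hW).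

Lemma stepP_nbhs W p : stepP W p -> nbhs 0 p.2.
Proof. by case=> _ _ _ []. Qed.

Fixpoint Zs (n : nat) : {Z : set G | nbhs 0 Z} :=
  match n with
  | 0 => exist _ setT filterT
  | n'.+1 => let s := step (filterI (svalP (Zs n')) (hB n')) in
             exist _ (sval s).2 (stepP_nbhs (svalP s))
  end.

Definition st n := step (filterI (svalP (Zs n)) (hB n)).
Definition Z n := sval (Zs n).
Definition W n := Z n `&` Bs n.
Definition a n := (sval (st n)).1.1.
Definition Z' n := (sval (st n)).1.2.

Lemma stP n : stepP (W n) (sval (st n)). Proof. exact: svalP. Qed.

Lemma a_neq0 n : a n != 0. Proof. by case: (stP n). Qed.
Lemma cyc_Z' n : cyc (a n) `<=` Z' n. Proof. by case: (stP n). Qed.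
Lemma Z'_add n x y : Z' n x -> Z' n y -> W n (x + y). Proof. by case: (stP n) => _ _ h _ _; apply: h. Qed.
Lemma Z_nbhs n : nbhs 0 (Z n). Proof. exact: svalP. Qed.
Lemma Z_succ n : Z n.+1 `<=` Z' n. Proof. by case: (stP n) => _ _ _ []. Qed.
Lemma Z_sep n x y : Z n.+1 x -> Z n.+1 y -> cyc (a n) (x - y) -> x - y = 0.
Proof. by case: (stP n) => _ _ _ _; apply. Qed.

Lemma Z'_W n : Z' n `<=` W n.
Proof. by move=> x hx; rewrite -[x]addr0; apply: Z'_add => //; apply: cyc_Z'; apply: cyc0. Qed.

Lemma W0 n : W n 0.
Proof. apply: nbhs_singleton; apply: filterI; [exact: Z_nbhs|exact: hB]. Qed.

Definition adm (c : nat -> G) := forall i, cyc (a i) (c i).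

Lemma tail c : adm c -> forall N M, (N <= M)%N -> W N (\sum_(N <= i < M) c i).
Proof.
move=> hc N M /subnKC <-; move: (M - N)%N => k; elim: k N => [|k IH] N.
  by rewrite addn0 big_geq //; apply: W0.
rewrite big_ltn; last by rewrite addnS ltnS leq_addr.
rewrite -addSnnS.
apply: Z'_add; first exact: cyc_Z'.
by apply: Z_succ; case: (IH N.+1).
Qed.

Lemma sep c : adm c -> forall N t u, Z N t -> Z N u ->
  \sum_(0 <= i < N) c i + t = u -> forall i, (i < N)%N -> c i = 0.
Proof.
move=> hc; elim=> [|N IH] t u Zt Zu E i //.
rewrite big_nat_recr //= -addrA in E.
have hcn : Z N (c N + t).
  by case: (Z'_add (cyc_Z' (hc N)) (Z_succ Zt)).
have hu : Z N u by case: (Z'_W (Z_succ Zu)).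
have low := IH _ _ hcn hu E.
have cN : c N = 0.
  have S0 : \sum_(0 <= j < N) c j = 0.
    by rewrite big_nat_cond big1 // => j /andP [/andP [_ hj] _]; apply: low.
  rewrite S0 add0r in E.
  have eq1 : c N = u - t by rewrite -E addrK.
  rewrite eq1; apply: (Z_sep Zu Zt).
  by move: (hc N); rewrite eq1.

rewrite ltnS leq_eqVlt => /orP [/eqP ->|] //; exact: low.
Qed.

Lemma sum_ext (c : nat -> G) M K : (forall i, (M <= i)%N -> c i = 0) -> (M <= K)%N ->
  \sum_(0 <= i < K) c i = \sum_(0 <= i < M) c i.
Proof.
move=> hz MK; rewrite (@big_cat_nat _ _ _ M) //=.
have -> : \sum_(M <= i < K) c i = 0.
  by rewrite big_nat_cond big1 // => i /andP [/andP [hi _] _]; apply: hz.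
by rewrite addr0.
Qed.

Lemma sepQ N : exists2 E : set G, nbhs 0 E & forall c M, adm c ->
  (forall i, (M <= i)%N -> c i = 0) -> E (\sum_(0 <= i < M) c i) ->
  forall i, (i < N)%N -> c i = 0.
Proof.
exists (Z N); first exact: Z_nbhs.
move=> c M hc hz hE.
rewrite -(sum_ext hz (leq_maxl M N)) in hE.
apply: (@sep c hc N (\sum_(N <= i < maxn M N) c i) (\sum_(0 <= i < maxn M N) c i)) => //.
  by case: (tail hc (leq_maxr M N)).
by rewrite -big_cat_nat // leq_maxr.
Qed.

Lemma tailB c : adm c -> forall N M, (N <= M)%N -> Bs N (\sum_(N <= i < M) c i).
Proof. by move=> hc N M NM; case: (tail hc NM). Qed.


Lemma ind_sum (i M : nat) (x : G) : (i < M)%N -> \sum_(0 <= k < M) (if k == i then x else 0) = x.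
Proof. by move=> h; rewrite -big_mkcond big_nat1_eq leq0n h. Qed.

Lemma a_neq i j : (i < j)%N -> a i != a j.
Proof.
move=> ij; apply/eqP => e.
pose c k := (if k == i then a i else 0) - (if k == j then a j else 0).
have hc : adm c.
  move=> k; apply: cyc_subr.
    by have [->|_] := eqVneq k i; [exists 1; rewrite mulr1z | exact: cyc0].
  by have [->|_] := eqVneq k j; [exists 1; rewrite mulr1z | exact: cyc0].
have Z0 : Z j.+1 0 by apply: nbhs_singleton; exact: Z_nbhs.
have s0 : \sum_(0 <= k < j.+1) c k + 0 = 0.
  rewrite addr0 sumrB !ind_sum // ?e ?subrr //.
  exact: ltn_trans ij _.
have := sep hc Z0 Z0 s0 (ltn_trans ij (ltnSn j)).
rewrite /c eqxx (ltn_eqF ij) subr0 => /eqP.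
by rewrite (negbTE (a_neq0 i)).
Qed.

Lemma a_inj : injective a.
Proof.
move=> i j e; case: (ltngtP i j) => // h.
  by move: (a_neq h); rewrite e eqxx.
by move: (a_neq h); rewrite e eqxx.
Qed.

End Constr.


Section Dir1.
Variable G : topologicalZmodType.
Variable A : set G.

Definition eb (b : A) (k : int) : cyc_prod A :=
  fun x => exist _ (val x *~ (if x == b then k else 0)) (mem_set (ex_intro _ _ erefl)).

Lemma eb_S b k : @S_set G A (eb b k).
Proof.
apply: (sub_finite_set _ (finite_set1 b)) => x /=.
rewrite /eb /=; have [//|_] := eqVneq x b; by rewrite mulr0z eqxx.
Qed.

Definition ebS b k : S_ A := exist _ (eb b k) (mem_set (eb_S b k)).

Definition ev (u : S_ A) (x : A) : G :=
  val ((val u : forall a : set_type A, set_type (cyc (val a))) x).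

Lemma S_ext (u v : S_ A) : (forall x, ev u x = ev v x) -> u = v.
Proof.
move=> h; apply: val_inj; apply: functional_extensionality_dep => x.
by apply: val_inj; exact: h.
Qed.

Lemma ev_eb b k x : ev (ebS b k) x = val x *~ (if x == b then k else 0).
Proof. by []. Qed.


Definition zf : cyc_prod A := fun x => exist _ (val x *~ 0) (mem_set (ex_intro _ 0 erefl)).

Lemma zf_S : @S_set G A zf.
Proof.
apply: (sub_finite_set _ (finite_set0 A)) => x /=.
by rewrite /zf /= mulr0z eqxx.
Qed.

Definition zS : S_ A := exist _ zf (mem_set zf_S).

Lemma ev_z x : ev zS x = 0.
Proof. by rewrite /ev /= mulr0z. Qed.

Lemma ebS0 b : ebS b 0 = zS.
Proof. by apply: S_ext => x; rewrite ev_eb ev_z; case: ifP => _; rewrite mulr0z. Qed.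

Lemma conv_z (bA : nat -> A) (k : nat -> int) :
  (forall x : A, exists N, forall n, (N <= n)%N -> bA n != x) ->
  (fun n => ebS (bA n) (k n)) @ \oo --> zS.
Proof.
move=> P Q; rewrite nbhsE => -[Op [oOp Opz] OpQ].
case: oOp => Ob oOb eqO.
have zOb : Ob (val zS) by move: Opz; rewrite -eqO.
have cv : (fun n => val (ebS (bA n) (k n)) : cyc_prod A) @ \oo --> (val zS : cyc_prod A).
  apply/cvg_sup => i U [V] [[W] oW <-] WfN WU.
  apply: (filterS WU); rewrite nbhs_simpl; have [N hN] := P i.
  exists N => // n /= hn.
  suff -> : eb (bA n) (k n) i = zf i by [].
  apply: val_inj => /=; rewrite /eb /=.
  by rewrite eq_sym (negbTE (hN n hn)).
have := cv Ob (open_nbhs_nbhs (conj oOb zOb)).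
rewrite nbhs_simpl => -[N _ hN]; exists N => // n /hN hn.
by apply: OpQ; rewrite -eqO.
Qed.


Lemma dir1 (H : set G) : infinite_set A -> topIsoS A H -> ~ NSS G.
Proof.
move=> infA [sH [phi [psi [c1 c2 cphi cpsi hadd]]]] [U [U0 hU]].
pose vp := fun u : S_ A => (val (phi u) : G).
have vz : vp zS = 0.
  have h : S_add_rel zS zS zS by move=> x /=; rewrite mulr0z addr0.
  move: (hadd _ _ _ h) => /(congr1 (fun t => t - vp zS)).
  by rewrite subrr addrK.
have vinj : injective vp by move=> u v /val_inj /(congr1 psi); rewrite !c1.
have hsub (b : A) : val b != 0 -> exists k, ~ U (vp (ebS b k)).
  move=> hb; apply: contrapT => hn.
  have allU k : U (vp (ebS b k)) by apply: contrapT => nk; apply: hn; exists k.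
  pose L := [set y | exists k, y = vp (ebS b k)].
  have sL : is_subgroup L.
    split; first by exists 0; rewrite ebS0 vz.
    move=> _ _ [k ->] [k' ->]; exists (k - k').
    have h : S_add_rel (ebS b (k - k')) (ebS b k') (ebS b k).
      move=> x /=; case: ifP => _; last by rewrite mulr0z addr0.
      by rewrite -mulrzDr subrK.
    by rewrite /vp (hadd _ _ _ h) addrK.
  have := hU L sL; have LU : L `<=` U by move=> _ [k ->].
  move=> /(_ LU) L0.
  have : L (vp (ebS b 1)) by exists 1.
  rewrite L0 /= -vz => /vinj /(congr1 (fun u => ev u b)).
  by rewrite ev_eb ev_z eqxx mulr1z; apply/eqP.
have infA' : infinite_set (A `\` [set 0]) by apply: infinite_setD => //; exact: finite_set1.
move/infiniteP/card_leP: infA' => -[f].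
have finj x y : f x = f y -> x = y.
  by move=> /(@inj _ _ _ f); apply; rewrite inE.
pose fv n := f (exist _ n (mem_set I)).
have fA n : A (val (fv n)) by case: (set_mem (valP (fv n))).
have fnz n : val (fv n) != 0 by case: (set_mem (valP (fv n))) => _ /eqP.
pose bA n : A := exist _ (val (fv n)) (mem_set (fA n)).
have binj n m : bA n = bA m -> n = m.
  move=> /(congr1 val) /= /val_inj /finj /(congr1 val) //.
pose k n := projT1 (cid (hsub (bA n) (fnz n))).
have kP n : ~ U (vp (ebS (bA n) (k n))) := projT2 (cid (hsub (bA n) (fnz n))).
have P (x : A) : exists N, forall n, (N <= n)%N -> bA n != x.
  case: (pselect (exists n, bA n = x)) => [[n0 e0]|ne].
    exists n0.+1 => n hn; apply/eqP => e.
    by move: hn; rewrite (binj n n0) ?ltnn // e e0.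
  by exists 0%N => n _; apply/eqP => e; apply: ne; exists n.
have cv := conv_z k P.
have cvs : continuous (set_val : set_type H -> G) by exact: initial_continuous.
have nU : nbhs zS [set u | U (vp u)].
  have h1 : nbhs (phi zS) [set y : set_type H | U (val y)].
    apply: (cvs (phi zS)).
    have -> : (set_val (phi zS) : G) = 0 by exact: vz.
    by [].
  exact: (cphi zS _ h1).
have := cv _ nU; rewrite nbhs_simpl => -[N _ hN].
exact: (kP N (hN N (leqnn N))).
Qed.

End Dir1.


Lemma sum_extG (G : zmodType) (c : nat -> G) M K : (forall i, (M <= i)%N -> c i = 0) -> (M <= K)%N ->
  \sum_(0 <= i < K) c i = \sum_(0 <= i < M) c i.
Proof.
move=> hz MK; rewrite (@big_cat_nat _ _ _ M) //=.
have -> : \sum_(M <= i < K) c i = 0.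
  by rewrite big_nat_cond big1 // => i /andP [/andP [hi _] _]; apply: hz.
by rewrite addr0.
Qed.


Lemma fin_nat_bound (X : set nat) : finite_set X -> exists M, forall n, X n -> (n < M)%N.
Proof.
move=> /finite_seqP [s ->]; exists (sumn s).+1 => n /=.
rewrite ltnS; elim: s => [|x s IH] //=.
rewrite in_cons => /orP [/eqP ->|/IH h]; first exact: leq_addr.
exact: leq_trans h (leq_addl _ _).
Qed.

Section Embed.
Variable G : topologicalZmodType.
Hypothesis hdisc : forall a : G, discrete_subspace (cyc a).
Variable a : nat -> G.
Hypothesis a_inj : injective a.
Definition admE (c : nat -> G) := forall i, cyc (a i) (c i).
Hypothesis htail : forall V : set G, nbhs 0 V -> exists N, forall c, admE c ->
  forall M, (N <= M)%N -> V (\sum_(N <= i < M) c i).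
Hypothesis hsep : forall N, exists2 E : set G, nbhs 0 E & forall c M, admE c ->
  (forall i, (M <= i)%N -> c i = 0) -> E (\sum_(0 <= i < M) c i) ->
  forall i, (i < N)%N -> c i = 0.

Definition an n : range a := exist _ (a n) (mem_set (imageT a n)).
Definition idx (x : range a) : nat := s2val (cid2 (set_mem (valP x))).
Lemma idxP x : a (idx x) = val x. Proof. exact: (s2valP' (cid2 (set_mem (valP x)))). Qed.
Lemma idx_an n : idx (an n) = n. Proof. exact: a_inj (idxP (an n)). Qed.
Lemma an_idx x : an (idx x) = x. Proof. by apply: val_inj; exact: idxP. Qed.

Definition coef (f : S_ (range a)) n : G := ev f (an n).
Lemma coef_cyc f n : cyc (a n) (coef f n).
Proof. exact: (set_mem (valP ((val f : cyc_prod (range a)) (an n)))). Qed.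
Lemma coef_adm f : admE (coef f). Proof. exact: coef_cyc. Qed.

Lemma S_ext' (f g : S_ (range a)) : (forall n, coef f n = coef g n) -> f = g.
Proof. by move=> h; apply: S_ext => x; rewrite -[x]an_idx; exact: h. Qed.

Lemma coef_supp f : exists M, forall n, (M <= n)%N -> coef f n = 0.
Proof.
have fin : finite_set [set x : range a | ev f x != 0] := set_mem (valP f).
have [M hM] : exists M, forall n, [set n | coef f n != 0] n -> (n < M)%N.
  apply: fin_nat_bound; apply: (sub_finite_set _ (finite_image idx fin)).
  by move=> n /= hn; exists (an n); rewrite ?idx_an.
exists M => n hn; apply/eqP; apply: contraT => h.
by move: (hM n h); rewrite ltnNge hn.
Qed.

Definition bnd f := sval (cid (coef_supp f)).
Lemma bndP f n : (bnd f <= n)%N -> coef f n = 0. Proof. exact: (svalP (cid (coef_supp f)) n). Qed.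
Definition phiv f := \sum_(0 <= i < bnd f) coef f i.

Lemma phiE f M : (forall n, (M <= n)%N -> coef f n = 0) -> phiv f = \sum_(0 <= i < M) coef f i.
Proof.
move=> hM; rewrite /phiv -(sum_extG (@bndP f) (leq_maxl (bnd f) M)).
by rewrite (sum_extG hM (leq_maxr (bnd f) M)).
Qed.

Lemma phiE' f M : (bnd f <= M)%N -> phiv f = \sum_(0 <= i < M) coef f i.
Proof. by move=> h; apply: phiE => n hn; apply: bndP; exact: leq_trans hn. Qed.

Lemma phi_diff f g M : (bnd f <= M)%N -> (bnd g <= M)%N ->
  phiv f - phiv g = \sum_(0 <= i < M) (coef f i - coef g i).
Proof. by move=> hf hg; rewrite (phiE' hf) (phiE' hg) sumrB. Qed.

Lemma phiv_inj : injective phiv.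
Proof.
move=> f g e; apply: S_ext' => n.
have [E E0 hE] := hsep n.+1.
pose M := maxn (bnd f) (bnd g).
have h0 : \sum_(0 <= i < M) (coef f i - coef g i) = 0.
  by rewrite -phi_diff ?leq_maxl ?leq_maxr // e subrr.
have := hE (fun i => coef f i - coef g i) M.
move=> /(_ _ _ _ n (ltnSn n)) h; apply/eqP; rewrite -subr_eq0; apply/eqP; apply: h.
- by move=> i; apply: cyc_subr; apply: coef_cyc.
- move=> i hi; rewrite !bndP ?subrr //.
    exact: leq_trans (leq_maxr _ _) hi.
  exact: leq_trans (leq_maxl _ _) hi.
- by rewrite h0; apply: nbhs_singleton.
Qed.


Section Mk.
Variable c : nat -> G.
Hypothesis hc : admE c.
Variable M : nat.
Hypothesis hM : forall n, (M <= n)%N -> c n = 0.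

Lemma mk_cyc (x : range a) : cyc (val x) (c (idx x)).
Proof. by rewrite -idxP; apply: hc. Qed.

Definition mkf : cyc_prod (range a) := fun x => exist _ (c (idx x)) (mem_set (mk_cyc x)).

Lemma mkf_S : @S_set G (range a) mkf.
Proof.
apply: (sub_finite_set _ (finite_image an (finite_II M))) => x /= hx.
exists (idx x); last exact: an_idx.
rewrite /= ltnNge; apply/negP => h; move: hx; rewrite hM // eqxx //.
Qed.

Definition mk : S_ (range a) := exist _ mkf (mem_set mkf_S).

Lemma coef_mk n : coef mk n = c n.
Proof. by rewrite /coef /ev /= idx_an. Qed.

Lemma phiv_mk : phiv mk = \sum_(0 <= i < M) c i.
Proof.
rewrite (@phiE mk M); last by move=> n hn; rewrite coef_mk hM.
by apply: eq_bigr => i _; rewrite coef_mk.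
Qed.
End Mk.

Definition Hs : set G := range phiv.

Lemma coef_z n : coef (zS (range a)) n = 0.
Proof. exact: ev_z. Qed.

Lemma Hs_sub : is_subgroup Hs.
Proof.
split.
  exists (zS (range a)) => //; rewrite (@phiE _ 0%N) ?big_geq // => n _; exact: coef_z.
move=> _ _ [f _ <-] [g _ <-].
pose d n := coef f n - coef g n.
pose M := maxn (bnd f) (bnd g).
have hd : admE d by move=> i; apply: cyc_subr; apply: coef_cyc.
have hdM : forall n, (M <= n)%N -> d n = 0.
  move=> n hn; rewrite /d !bndP ?subrr //.
    exact: leq_trans (leq_maxr _ _) hn.
  exact: leq_trans (leq_maxl _ _) hn.
exists (mk hd hdM) => //.
by rewrite phiv_mk (phi_diff (leq_maxl _ _) (leq_maxr _ _)).
Qed.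

Lemma phiv_add f g h : S_add_rel f g h -> phiv h = phiv f + phiv g.
Proof.
move=> hr.
pose M := maxn (bnd h) (maxn (bnd f) (bnd g)).
have hf : (bnd f <= M)%N by rewrite /M (leq_trans (leq_maxl _ _) (leq_maxr _ _)).
have hg : (bnd g <= M)%N by rewrite /M (leq_trans (leq_maxr _ _) (leq_maxr _ _)).
have hh : (bnd h <= M)%N by rewrite /M leq_maxl.
rewrite (phiE' hf) (phiE' hg) (phiE' hh) -big_split /=.
by apply: eq_bigr => i _; exact: (hr (an i)).
Qed.


Lemma prod_single (F0 : cyc_prod (range a)) n :
  nbhs F0 [set F : cyc_prod (range a) | F (an n) = F0 (an n)].
Proof.
have h1 : nbhs (F0 (an n)) [set F0 (an n)].
  have o : open [set F0 (an n)] := @hdisc (a n) (F0 (an n)).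
  exact: (open_nbhs_nbhs (conj o erefl)).
exact: (@proj_continuous _ _ (an n) F0 _ h1).
Qed.

Lemma agree_nbhs (f : S_ (range a)) N :
  nbhs f [set g : S_ (range a) | forall n, (n < N)%N -> coef g n = coef f n].
Proof.
have cv : continuous (set_val : set_type (@S_set G (range a)) -> cyc_prod (range a)).
  exact: initial_continuous.
suff : nbhs (val f : cyc_prod (range a))
    [set F : cyc_prod (range a) | forall n, (n < N)%N -> F (an n) = (val f : cyc_prod (range a)) (an n)].
  move=> h; apply: (@filterS _ _ (@nbhs_filter (set_type (@S_set G (range a))) f) _ _ _ (cv f _ h)) => g /= hg n hn.
  exact: (congr1 val (hg n hn)).
elim: N => [|N IH].
  by apply: (filterS _ filterT) => F _ n.
apply: filterS (filterI IH (prod_single _ N)) => F [h1 h2] n.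
by rewrite ltnS leq_eqVlt => /orP [/eqP ->|/h1].
Qed.


Definition phi (f : S_ (range a)) : set_type Hs := exist _ (phiv f) (mem_set (imageT phiv f)).
Definition psi (h : set_type Hs) : S_ (range a) := s2val (cid2 (set_mem (valP h))).
Lemma psiP h : phiv (psi h) = val h.
Proof. exact: (s2valP' (cid2 (set_mem (valP h)))). Qed.

Lemma phiK : cancel phi psi.
Proof. by move=> f; apply: phiv_inj; rewrite psiP. Qed.
Lemma psiK : cancel psi phi.
Proof. by move=> h; apply: val_inj; rewrite /= psiP. Qed.

Lemma phiv_cont : continuous phiv.
Proof.
move=> f V /= hV.
have [N hN] := htail (nbhs_shift0 hV).
apply: (@filterS _ _ (@nbhs_filter (set_type (@S_set G (range a))) f) _ _ _ (agree_nbhs f N)).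
move=> g hg /=.
pose M := maxn N (maxn (bnd f) (bnd g)).
have hfM : (bnd f <= M)%N by rewrite /M (leq_trans (leq_maxl _ _) (leq_maxr _ _)).
have hgM : (bnd g <= M)%N by rewrite /M (leq_trans (leq_maxr _ _) (leq_maxr _ _)).
have hNM : (N <= M)%N by rewrite /M leq_maxl.
have eq1 := phi_diff hgM hfM.
rewrite (@big_cat_nat _ _ _ N) //= in eq1.
have z0 : \sum_(0 <= i < N) (coef g i - coef f i) = 0.
  by rewrite big_nat_cond big1 // => i /andP [/andP [_ hi] _]; rewrite hg ?subrr.
rewrite z0 add0r in eq1.
have e : phiv g = phiv f + \sum_(N <= i < M) (coef g i - coef f i).
  by rewrite -eq1 addrC subrK.
rewrite e; apply: (hN (fun i => coef g i - coef f i)) => //.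
by move=> i; apply: cyc_subr; apply: coef_cyc.
Qed.

Lemma phi_cont : continuous phi.
Proof.
apply: (@continuous_comp_initial (set_type Hs) (set_type (@S_set G (range a))) G set_val phi).
exact: phiv_cont.
Qed.


Lemma loc_const (h : set_type Hs) n : nbhs h [set y | coef (psi y) n = coef (psi h) n].
Proof.
have [E E0 hE] := hsep n.+1.
have cvs : continuous (set_val : set_type Hs -> G) by exact: initial_continuous.
have h1 := nbhs_unshift (val h) E0.
apply: (@filterS _ _ (@nbhs_filter (set_type Hs) h) _ _ _ (cvs h _ h1)) => y /= hy.
pose M := maxn (bnd (psi y)) (bnd (psi h)).
apply/eqP; rewrite -subr_eq0; apply/eqP.
apply: (hE (fun i => coef (psi y) i - coef (psi h) i) M) => //.
- by move=> i; apply: cyc_subr; apply: coef_cyc.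
- move=> i hi; rewrite !bndP ?subrr //.
    exact: leq_trans (leq_maxr _ _) hi.
  exact: leq_trans (leq_maxl _ _) hi.
- by rewrite -phi_diff ?leq_maxl ?leq_maxr // !psiP.
Qed.

Lemma psi_cont : continuous psi.
Proof.
apply: (@continuous_comp_initial (set_type (@S_set G (range a))) (set_type Hs) (cyc_prod (range a)) set_val psi).
move=> h.
have FF : Filter ((set_val \o psi) @ h) by apply: fmap_filter; apply: nbhs_filter.
apply/cvg_sup => i U [V] [[W] oW <-] WfN WU.
have key : nbhs h [set y | (val (psi y) : cyc_prod _) i = (val (psi h) : cyc_prod _) i].
  rewrite -[i]an_idx.
  apply: (@filterS _ _ (@nbhs_filter (set_type Hs) h) _ _ _ (loc_const h (idx i))) => y hy.
  by apply: val_inj; exact: hy.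
apply: (@filterS _ _ (@nbhs_filter (set_type Hs) h) _ _ _ key) => y /= hy.
by apply: WU; move: WfN; rewrite /= !set_valE /= hy.
Qed.


Lemma embed_main : infinite_set (range a) /\ topIsoS (range a) Hs.
Proof.
split.
  move=> fin; apply: infinite_nat.
  apply: (sub_finite_set _ (finite_preimage (f := a) _ fin)) => [n _|]; first exact: imageT.
  by move=> x y _ _; apply: a_inj.
split; first exact: Hs_sub.
exists phi, psi; split.
- exact: phiK.
- exact: psiK.
- exact: phi_cont.
- exact: psi_cont.
- by move=> f g h hr; rewrite /= (phiv_add hr).
Qed.

End Embed.

Unset Implicit Arguments.

Theorem theorem8p2 (G : topologicalZmodType) :
  metrizable G ->
  (forall a : G, discrete_subspace (cyc a)) ->
  ((exists (A : set G) (H : set G), infinite_set A /\ topIsoS A H) <-> ~ NSS G).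
Proof.
move=> hm hd; split.
  by move=> [A [H [infA hT]]]; exact: (dir1 infA hT).
move=> hnss.
have [Bs [hB hBV]] := metr_base hm.
pose aa := a hnss hd hB.
have ainj : injective aa := @a_inj G hnss hd Bs hB.
have ht : forall V : set G, nbhs 0 V -> exists N : nat, forall c : nat -> G,
    admE aa c -> forall M : nat, (N <= M)%N -> V (\sum_(N <= i < M) c i).
  move=> V hV; have [N hN] := hBV V hV; exists N => c hc M NM.
  by apply: hN; exact: (@tailB G hnss hd Bs hB c hc N M NM).
have hs := @sepQ G hnss hd Bs hB.
have [infA hT] := @embed_main G hd aa ainj ht hs.
by exists (range aa), (Hs ainj).
Qed.
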